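(* Let $N$ be a tree-based network. Then $|Sup(N)|$ equals the number of supporting sets for $\mathcal{J}_N$.
   Context: A phylogenetic network on a nonempty finite set $X$ is a rooted acyclic digraph with no parallel arcs such that: the unique root has out-degree at least one; $X$ is exactly the set of vertices of out-degree zero (leaves), each of in-degree one; every other vertex either has in-degree one and out-degree at least two (a tree vertex) or in-degree at least two and out-degree one (a reticulation). If $|X|=1$, the network may also consist of the single vertex in $X$. An omnian is a non-leaf vertex all of whose children are reticulations. $N$ is tree-based if it has a spanning tree rooted at the root of $N$ all of whose leaves lie in $X$; a support tree for $N$ is such a spanning tree, i.e., a subgraph of $N$ containing all vertices of $N$ that is a directed tree rooted at the root of $N$ whose leaf set is exactly $X$. $Sup(N)$ denotes the set of support trees for $N$ (distinguished by their arc sets). Let $R_t$ be the set of reticulations of $N$ with no reticulation parent, and $Q_t$ the set of vertices of $N$ having a child in $R_t$. $\mathcal{J}_N$ is the bipartite graph with vertex bipartition $\{Q_t,R_t\}$ and an edge $\{q,r\}$ for each arc $(q,r)$ of $N$ with $q\in Q_t$, $r\in R_t$. A supporting set for $\mathcal{J}_N$ is a set $E$ of edges of $\mathcal{J}_N$ such that each omnian in $Q_t$ is incident with at least one edge of $E$ and each vertex of $R_t$ is incident with exactly one edge of $E$. *)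

(* Defs.v *)
From mathcomp Require Import all_boot.
Set Implicit Arguments. Unset Strict Implicit. Unset Printing Implicit Defensive.

(* A digraph on a finite vertex type V is given by its arc relation E
   (a relation rules out parallel arcs); rho is the designated root. *)
Section Network.
Variables (V : finType) (E : rel V) (rho : V).

Definition indeg (v : V) : nat := #|[set u | E u v]|.
Definition outdeg (v : V) : nat := #|[set w | E v w]|.

(* leaves = vertices of out-degree zero; X is exactly this set *)
Definition leaf (v : V) : bool := outdeg v == 0.
Definition leafset : {set V} := [set v | leaf v].

Definition reticulation (v : V) : bool := (2 <= indeg v) && (outdeg v == 1).
Definition tree_vertex (v : V) : bool := (indeg v == 1) && (2 <= outdeg v).

Definition acyclic : bool := [forall x, forall y, E x y ==> ~~ connect E y x].

Definition phylo_network : Prop :=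
  acyclic /\
  (forall v, (indeg v == 0) = (v == rho)) /\
  ( (#|V| = 1) \/
    ( 1 <= outdeg rho /\
      forall v, v != rho ->
        [|| (leaf v && (indeg v == 1)), tree_vertex v | reticulation v] )).

Definition omnian (v : V) : bool :=
  ~~ leaf v && [forall w, E v w ==> reticulation w].

Definition Rt : {set V} :=
  [set r | reticulation r && [forall u, E u r ==> ~~ reticulation u]].
Definition Qt : {set V} := [set q | [exists r in Rt, E q r]].

(* edges of the bipartite graph J_N, one per arc (q,r), q in Q_t, r in R_t *)
Definition J_edges : {set V * V} :=
  [set p | [&& E p.1 p.2, p.1 \in Qt & p.2 \in Rt]].

Definition supporting_set (S : {set V * V}) : bool :=
  [&& S \subset J_edges,
      [forall q in Qt, omnian q ==> [exists r, (q, r) \in S]] &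
      [forall r in Rt, #|[set q | (q, r) \in S]| == 1]].

(* Support tree: a set of arcs of N forming (with all vertices of N) a
   directed tree rooted at rho whose leaf set is exactly X. *)
Definition arc_rel (A : {set V * V}) : rel V := fun x y => (x, y) \in A.

Definition support_tree (A : {set V * V}) : bool :=
  [&& [forall p in A, E p.1 p.2],
      [forall v, #|[set u | (u, v) \in A]| == (v != rho)],
      [forall v, connect (arc_rel A) rho v] &
      [forall v, (#|[set w | (v, w) \in A]| == 0) == leaf v]].

Definition Sup : {set {set V * V}} := [set A | support_tree A].

Definition tree_based : Prop := exists A, support_tree A.

End Network.

(* Main.v *)
Require Import Defs.
From mathcomp Require Import all_boot.
Set Implicit Arguments. Unset Strict Implicit. Unset Printing Implicit Defensive.

Lemma le1_eq (T : finType) (A : {set T}) x y :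
  #|A| <= 1 -> x \in A -> y \in A -> x = y.
Proof. by move=> /card_le1_eqP H xA yA; apply: H. Qed.

Lemma ret_arc_in (V : finType) (E : rel V) (rho : V) A u v :
  support_tree E rho A -> reticulation E u -> E u v -> (u, v) \in A.
Proof.
case/and4P=> /forall_inP HE _ _ /forallP Hl /andP[_ /eqP Ho] Euv.
have := Hl u; rewrite /leaf Ho /= => /eqP Hc.
have : 0 < #|[set w | (u, w) \in A]| by rewrite lt0n Hc.
case/card_gt0P=> w; rewrite inE => uwA.
have Euw := HE _ uwA.
have -> : v = w.
  by apply: (@le1_eq _ [set w | E u w]); rewrite ?inE //; move: Ho; rewrite /outdeg => ->.
exact: uwA.
Qed.

Definition Fset (V : finType) (E : rel V) : {set V * V} :=
  [set p : V * V | [&& E p.1 p.2, p.2 \notin Rt E & (reticulation E p.2 ==> reticulation E p.1)]].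

Lemma root_noparent (V : finType) (E : rel V) (rho : V) u :
  phylo_network E rho -> E u rho = false.
Proof.
case=> _ [Hr _]; apply/negbTE/negP=> Eu.
have := Hr rho; rewrite eqxx /indeg => /eqP/cards0_eq H.
have : u \in [set u | E u rho] by rewrite inE.
by rewrite H inE.
Qed.

Lemma forced (V : finType) (E : rel V) (rho : V) A u v :
  phylo_network E rho -> support_tree E rho A -> v \notin Rt E ->
  ((u, v) \in A) = ((u, v) \in Fset E).
Proof.
move=> Hn HA vR; have HA' := HA.
move: HA => /and4P[/forall_inP HE /forallP Hpar _ _].
rewrite inE /= vR /=.
have [->|vnr] := eqVneq v rho.
  rewrite (root_noparent u Hn) /=; apply/negbTE/negP=> /HE /=.
  by rewrite (root_noparent u Hn).
have Hp1 : #|[set u | (u, v) \in A]| = 1 by have := Hpar v; rewrite vnr => /eqP.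
case: Hn => Hac [Hr [H1|[_ Hv]]].
  by move: vnr; have /fintype_le1P := eq_leq H1 => /(_ rho v) ->; rewrite eqxx.
case Rv: (reticulation E v).
  move: vR; rewrite inE Rv /= negb_forall => /existsP[u0].
  rewrite negb_imply negbK => /andP[Eu0 Ru0].
  have u0A := ret_arc_in HA' Ru0 Eu0.
  apply/idP/idP.
    move=> uvA; have -> : u = u0.
      by apply: (@le1_eq _ [set u | (u, v) \in A]); rewrite ?inE ?Hp1.
    by rewrite Eu0.
  by case/andP=> Euv Ru; exact: ret_arc_in HA' Ru Euv.
rewrite andbT; apply/idP/idP; first by move/HE.
move=> Euv.
have Hi : indeg E v = 1.
  by move: (Hv v vnr); rewrite Rv orbF /tree_vertex => /orP[/andP[_ /eqP]|/andP[/eqP]].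
have : 0 < #|[set u | (u, v) \in A]| by rewrite Hp1.
case/card_gt0P=> w; rewrite inE => wA.
have -> : u = w.
  by apply: (@le1_eq _ [set u | E u v]); rewrite ?inE ?(HE _ wA) //; move: Hi; rewrite /indeg => ->.
exact: wA.
Qed.

Definition h1 (V : finType) (E : rel V) (A : {set V * V}) : {set V * V} :=
  [set p in A | p.2 \in Rt E].

Lemma Qt_noret (V : finType) (E : rel V) q : q \in Qt E -> ~~ reticulation E q.
Proof.
rewrite inE => /existsP[r /andP[]]; rewrite inE => /andP[_ /forallP H] Eqr.
by have := H q; rewrite Eqr.
Qed.

Lemma Rt_ne_rho (V : finType) (E : rel V) (rho : V) r :
  phylo_network E rho -> r \in Rt E -> r != rho.
Proof.
move=> Hn; rewrite inE => /andP[/andP[H _] _]; apply/negP => /eqP Er.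
case: Hn => _ [Hr _]; move: (Hr r); rewrite Er eqxx => /eqP.
by move: H; rewrite Er => /[swap] ->.
Qed.

Lemma sup_to_ss (V : finType) (E : rel V) (rho : V) A :
  phylo_network E rho -> support_tree E rho A -> supporting_set E (h1 E A).
Proof.
move=> Hn HA; have HA' := HA.
move: HA => /and4P[/forall_inP HE /forallP Hpar _ /forallP Hl].
apply/and3P; split.
- apply/subsetP=> p; rewrite in_set => /andP[pA pR].
  rewrite in_set (HE _ pA) pR andbT /= in_set; apply/existsP; exists p.2; by rewrite pR (HE _ pA).
- apply/forall_inP=> q qQ; apply/implyP=> /andP[nl /forallP Ho].
  have := Hl q; rewrite (negbTE nl) eqbF_neg -lt0n => /card_gt0P[w]; rewrite inE => qwA.
  have Ew := HE _ qwA; have Rw := implyP (Ho w) Ew.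
  case wR: (w \in Rt E).
    by apply/existsP; exists w; rewrite inE qwA wR.
  move: qwA; rewrite (forced _ Hn HA') ?wR // inE /= Rw /= => /and3P[_ _ Rq].
  by move: (Qt_noret qQ); rewrite Rq.
- apply/forall_inP=> r rR.
  have -> : [set q | (q, r) \in h1 E A] = [set q | (q, r) \in A].
    by apply/setP=> q; move: rR; rewrite !inE /= => ->; rewrite andbT.
  by have := Hpar r; rewrite (Rt_ne_rho Hn rR).
Qed.

Lemma conn_lemma (V : finType) (E : rel V) (rho : V) (A : {set V * V}) :
  acyclic E -> (forall p, p \in A -> E p.1 p.2) ->
  (forall v, v != rho -> exists u, (u, v) \in A) ->
  forall v, connect (arc_rel A) rho v.
Proof.
move=> /forallP Hac HE Hp.
suff H : forall n v, #|[set u | connect E u v]| <= n -> connect (arc_rel A) rho v.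
  by move=> v; apply: (H _ v (leqnn _)).
elim=> [|n IH] v.
  rewrite leqn0 => /eqP/cards0_eq H0.
  have : v \in [set u | connect E u v] by rewrite inE connect0.
  by rewrite H0 inE.
move=> Hc.
have [->|vr] := eqVneq v rho; first exact: connect0.
have [u uvA] := Hp v vr; have Euv := HE _ uvA.
apply: (connect_trans (y := u)); last by apply: connect1.
apply: IH; rewrite -ltnS; apply: leq_trans Hc; apply: proper_card.
apply/properP; split.
  apply/subsetP=> x; rewrite !inE => Hx; apply: connect_trans Hx _; exact: connect1.
exists v; rewrite !inE ?connect0 //.
by have /forallP/(_ v) := Hac u; rewrite Euv.
Qed.

Lemma ss_sub (V : finType) (E : rel V) S p :
  supporting_set E S -> p \in S -> E p.1 p.2 && (p.2 \in Rt E).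
Proof.
case/and3P=> /subsetP H _ _ /H; rewrite in_set => /and3P[-> _ ->] //.
Qed.

Lemma ss_to_sup (V : finType) (E : rel V) (rho : V) A0 S :
  phylo_network E rho -> support_tree E rho A0 -> supporting_set E S ->
  support_tree E rho (S :|: Fset E).
Proof.
move=> Hn HA0 HS; have HA0' := HA0; have HS' := HS.
move: HA0 => /and4P[/forall_inP HE0 /forallP Hpar0 _ /forallP Hl0].
move: HS => /and3P[_ /forall_inP Hom /forall_inP Hr].
have HE : forall p, p \in S :|: Fset E -> E p.1 p.2.
  move=> p; rewrite in_setU => /orP[/(ss_sub HS')/andP[]//|].
  by rewrite in_set => /and3P[].
have Hpar : forall v, #|[set u | (u, v) \in S :|: Fset E]| == (v != rho).
  move=> v; case vR: (v \in Rt E); have vR2 := vR; rewrite in_set in vR2.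
    have -> : [set u | (u, v) \in S :|: Fset E] = [set q | (q, v) \in S].
      apply/setP=> u; rewrite !in_set /= vR2 /= !andbF orbF //.
    by rewrite (Rt_ne_rho Hn vR); apply: Hr; rewrite vR.
  have -> : [set u | (u, v) \in S :|: Fset E] = [set u | (u, v) \in A0].
    apply/setP=> u; rewrite [u \in _]in_set [u \in _]in_set in_setU (forced _ Hn HA0') ?vR //.
    case uvS: ((u, v) \in S) => //=.
    by move: (ss_sub HS' uvS) => /andP[_]; rewrite /= vR.
  exact: Hpar0.
apply/and4P; split.
- by apply/forall_inP.
- by apply/forallP.
- apply/forallP; apply: (@conn_lemma V E rho); first by case: Hn.
    exact: HE.
  move=> v vr; have := Hpar v; rewrite vr => /cards1P[u Hu].
  exists u; have : u \in [set u | (u, v) \in S :|: Fset E] by rewrite Hu set11.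
  by rewrite [u \in _]in_set.
- apply/forallP=> v; case lv: (leaf E v).
  + have : leaf E v := lv; rewrite /leaf /outdeg => /eqP/cards0_eq H0.
    rewrite eqb_id -leqn0 -(cards0 V) -H0; apply: subset_leq_card.
    by apply/subsetP=> w; rewrite [w \in _]in_set [w \in _]in_set => /HE.
  + rewrite eqbF_neg -lt0n.
    have := Hl0 v; rewrite lv eqbF_neg -lt0n => /card_gt0P[w]; rewrite in_set => vwA.
    case wR: (w \in Rt E).
      have vQ : v \in Qt E by rewrite in_set; apply/existsP; exists w; rewrite wR (HE0 _ vwA).
      case ov: (omnian E v).
        have := Hom v vQ; rewrite ov => /existsP[r vrS].
        by apply/card_gt0P; exists r; rewrite in_set in_setU vrS.
      move: ov; rewrite /omnian lv /= => /negbT; rewrite negb_forall => /existsP[w'].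
      rewrite negb_imply => /andP[Ew' Rw'].
      apply/card_gt0P; exists w'; rewrite in_set in_setU; apply/orP; right.
      rewrite in_set /= Ew' (negbTE Rw') /= andbT.
      by apply/negP; rewrite in_set (negbTE Rw').
    apply/card_gt0P; exists w; rewrite in_set in_setU; apply/orP; right.
    by rewrite -(forced _ Hn HA0') ?wR.
Qed.

Lemma inF (V : finType) (E : rel V) p :
  (p \in Fset E) = [&& E p.1 p.2, p.2 \notin Rt E & (reticulation E p.2 ==> reticulation E p.1)].
Proof. by rewrite in_set. Qed.

Lemma inh1 (V : finType) (E : rel V) A p : (p \in h1 E A) = (p \in A) && (p.2 \in Rt E).
Proof. by rewrite in_set. Qed.

Lemma recon (V : finType) (E : rel V) (rho : V) A :
  phylo_network E rho -> support_tree E rho A -> A = h1 E A :|: Fset E.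
Proof.
move=> Hn HA; apply/setP=> [[u v]]; rewrite in_setU inh1 /=.
case vR: (v \in Rt E).
  by rewrite inF /= vR /= andbF orbF andbT.
by rewrite andbF /= (forced _ Hn HA) ?vR.
Qed.

Lemma h1_inv (V : finType) (E : rel V) S :
  supporting_set E S -> h1 E (S :|: Fset E) = S.
Proof.
move=> HS; apply/setP=> [[u v]]; rewrite inh1 in_setU inF /=.
case vR: (v \in Rt E); first by rewrite /= andbF orbF andbT.
rewrite andbF; apply/esym/negbTE/negP=> /(ss_sub HS)/andP[_]; by rewrite vR.
Qed.

Theorem corollary1 (V : finType) (E : rel V) (rho : V) :
  phylo_network E rho ->
  tree_based E rho ->
  #|Sup E rho| = #|[set S : {set V * V} | supporting_set E S]|.
Proof.
move=> Hn [A0 HA0].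
have inj : {in Sup E rho &, injective (h1 E)}.
  move=> A B; rewrite !in_set => HA HB eqAB.
  by rewrite (recon Hn HA) (recon Hn HB) eqAB.
rewrite -(card_in_imset inj).
suff -> : h1 E @: Sup E rho = [set S : {set V * V} | supporting_set E S] by [].
apply/eqP; rewrite eqEsubset; apply/andP; split.
  apply/subsetP=> S /imsetP[A]; rewrite !in_set => HA ->.
  exact: sup_to_ss Hn HA.
apply/subsetP=> S; rewrite in_set => HS.
apply/imsetP; exists (S :|: Fset E); last by rewrite h1_inv.
by rewrite in_set; apply: ss_to_sup Hn HA0 HS.
Qed.
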